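(* Let $(G=(V,E),(p_e)_{e\in E})$ be an instance of the Independent Cascade (IC) model, let $k\in\mathbb{Z}^+$ and $d\in\mathbb{Z}^+$. Let $\pi_g$ be the greedy policy, and let $\alpha(T_g)$ be the regret ratio of the $(\pi_g,k,d)$-process (both defined in the context). Then for every policy $\pi_*$, \[F(\pi_g,k,d)\ \ge\ \big(1-e^{-1/\alpha(T_g)}\big)\cdot F(\pi_*,k,d).\]
   Context: IC model: a directed graph $G=(V,E)$ with a probability $p_e\in(0,1]$ on each edge. Each edge is independently live with probability $p_e$ and dead otherwise. Diffusion proceeds in rounds: in each round every node activated in the previous round (seed nodes count as activated when seeded) attempts to activate each inactive out-neighbor $u$ along edge $(v,u)$, succeeding iff the edge is live; the state (live/dead) of each attempted edge thereby becomes observed. A realization is a pair $\phi=(L(\phi),D(\phi))$ of disjoint subsets of $E$ (observed live and observed dead edges); it is full if $L(\phi)\cup D(\phi)=E$; $\Psi$ denotes the set of full realizations, $\phi_\emptyset=(\emptyset,\emptyset)$. $\phi_1\prec\phi_2$ means $L(\phi_1)\subseteq L(\phi_2)$ and $D(\phi_1)\subseteq D(\phi_2)$, and $\Pr[\phi_2\mid\phi_1]=\prod_{e\in L(\phi_2)\setminus L(\phi_1)}p_e\prod_{e\in D(\phi_2)\setminus D(\phi_1)}(1-p_e)$; $\Pr[\phi]=\Pr[\phi\mid\phi_\emptyset]$. A status is a pair $U=(\dot S(U),\dot\phi(U))$ of a set of currently active nodes and a realization of the observed edges. For $S\subseteq V$, full $\psi$ and $t\in\mathbb{Z}^+\cup\{\infty\}$,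 $A_t(S,\psi)$ is the set of nodes $v$ such that some node of $S$ reaches $v$ via a path of at most $t$ edges (any length if $t=\infty$) all in $L(\psi)$. Define $\Delta_t(S,V^*,\psi)=|A_t(S\cup V^*,\psi)|-|A_t(S,\psi)|$ and $\Delta f_t(S,V^*,\phi)=\sum_{\psi\in\Psi,\ \phi\prec\psi}\Pr[\psi\mid\phi]\,\Delta_t(S,V^*,\psi)$. A policy $\pi$ maps each status $(S,\phi)$ to a single node $\pi(S,\phi)\in V$. The $(\pi,k,d)$-process: set $(S,\phi)=(\emptyset,\phi_\emptyset)$; repeat $k$ times: (seeding step) select and activate the node $\pi(S,\phi)$; (observing step) observe the diffusion for $d$ rounds (waiting a round is allowed even if nothing can spread) and update $S$ to the set of currently active nodes and $\phi$ to the currently observed realization. Finally let the diffusion run until it terminates. $F(\pi,k,d)$ is the expected number of active nodes at the end. The greedy policy is $\pi_g(S,\phi)\in\arg\max_{v\in V}\Delta f_\infty(S,\{v\},\phi)$. For a status $U$, let $\dot{\mathcal U}_\infty(U)$ be the set of possible statuses reached when, starting from $U$, the diffusion continues without new seeds until it terminates (each with probability $\Pr[\dot\phi(U_* )\mid\dot\phi(U)]$). Define \[\alpha_{\infty,\infty}(U)=\frac{\sum_{U_*\in\dot{\mathcal U}_\infty(U)}\Pr[\dot\phi(U_* )\mid\dot\phi(U)]\max_v\Delta f_\infty(\dot S(U_* ),\{v\},\dot\phi(U_* ))}{\max_v\Delta f_\infty(\dot S(U),\{v\},\dot\phi(U))}.\] $\alpha(T_g)$ is the maximum of $\alpha_{\infty,\infty}(U)$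 over all statuses $U$ that appear in the decision tree $T_g$ of the $(\pi_g,k,d)$-process, i.e., over the initial status $(\emptyset,\phi_\emptyset)$ and every status that can be observed (with positive probability) at a seeding step of that process. *)

(* Defs.v *)
From HB Require Import structures.
From mathcomp Require Import all_boot all_order all_algebra.
From mathcomp Require Import reals sequences exp.

Set Implicit Arguments.
Unset Strict Implicit.
Unset Printing Implicit Defensive.

Import Order.TTheory GRing.Theory Num.Theory.
Local Open Scope ring_scope.

Section IC.
Variable R : realType.
Variable V : finType.

(* directed edges are pairs (tail, head) *)
Definition edge := (V * V)%type.

Definition realization := ({set edge} * {set edge})%type.
Definition liveE (phi : realization) : {set edge} := phi.1.
Definition deadE (phi : realization) : {set edge} := phi.2.

Definition is_realization (phi : realization) : bool :=
  [disjoint liveE phi & deadE phi].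

Definition full (E : {set edge}) (psi : realization) : bool :=
  is_realization psi && (liveE psi :|: deadE psi == E).

Definition phi_empty : realization := (set0, set0).

Definition prec (phi1 phi2 : realization) : bool :=
  (liveE phi1 \subset liveE phi2) && (deadE phi1 \subset deadE phi2).

Definition Prc (p : edge -> R) (phi2 phi1 : realization) : R :=
  (\prod_(e in liveE phi2 :\: liveE phi1) p e) *
  (\prod_(e in deadE phi2 :\: deadE phi1) (1 - p e)).

Definition Pr (p : edge -> R) (phi : realization) : R := Prc p phi phi_empty.

(* A_t(S, psi); t = None encodes t = infinity *)
Definition live_rel (psi : realization) : rel V := fun x y => (x, y) \in liveE psi.

Fixpoint A_fin (t : nat) (S : {set V}) (psi : realization) : {set V} :=
  match t with
  | 0 => S
  | t'.+1 => let B := A_fin t' S psi in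
             B :|: [set v | [exists u in B, live_rel psi u v]]
  end.

Definition A_t (t : option nat) (S : {set V}) (psi : realization) : {set V} :=
  match t with
  | Some n => A_fin n S psi
  | None => [set v | [exists u in S, connect (live_rel psi) u v]]
  end.

Definition Delta_t (t : option nat) (S Vs : {set V}) (psi : realization) : R :=
  (#|A_t t (S :|: Vs) psi|)%:R - (#|A_t t S psi|)%:R.

Definition Deltaf_t (E : {set edge}) (p : edge -> R) (t : option nat)
    (S Vs : {set V}) (phi : realization) : R :=
  \sum_(psi : realization | full E psi && prec phi psi)
     Prc p psi phi * Delta_t t S Vs psi.

Definition Deltaf_inf E p := Deltaf_t E p None.

(* a status: (active nodes, observed realization) *)
Definition status := ({set V} * realization)%type.

Definition policy := status -> V.

(* Every active
   node that has not yet tried its out-edges (equivalently: every unobserved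
   edge from an active node to an inactive node) is attempted. *)
Definition round (E : {set edge}) (psi : realization) (U : status) : status :=
  let S := U.1 in
  let phi := U.2 in
  let att := [set e in E | [&& e.1 \in S, e.2 \notin S,
                              e \notin liveE phi & e \notin deadE phi]] in
  let lv := att :&: liveE psi in
  (S :|: [set e.2 | e in lv], (liveE phi :|: lv, deadE phi :|: (att :\: liveE psi))).

(* continue the diffusion without new seeds until it terminates
   (#|V|.+1 rounds always reach the fixpoint) *)
Definition terminate (E : {set edge}) (psi : realization) (U : status) : status :=
  iter #|V|.+1 (round E psi) U.

Definition seed_observe (E : {set edge}) (pi : policy) (d : nat)
    (psi : realization) (U : status) : status :=
  iter d (round E psi) (pi U |: U.1, U.2).

Definition status0 : status := (set0, phi_empty).

(* status at the beginning of the (i+1)-th seeding step *)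
Definition status_at (E : {set edge}) (pi : policy) (d : nat)
    (psi : realization) (i : nat) : status :=
  iter i (seed_observe E pi d psi) status0.

Definition final_status (E : {set edge}) (pi : policy) (k d : nat)
    (psi : realization) : status :=
  terminate E psi (status_at E pi d psi k).

Definition Fval (E : {set edge}) (p : edge -> R) (pi : policy) (k d : nat) : R :=
  \sum_(psi : realization | full E psi)
     Pr p psi * (#|(final_status E pi k d psi).1|)%:R.

Definition greedy (E : {set edge}) (p : edge -> R) (pi : policy) : Prop :=
  forall U : status, forall v : V,
    Deltaf_inf E p U.1 [set v] U.2 <= Deltaf_inf E p U.1 [set pi U] U.2.

(* max_v Deltaf_inf(S, {v}, phi)  (all these values are >= 0) *)
Definition maxgain (E : {set edge}) (p : edge -> R) (U : status) : R :=
  \big[Num.max/0]_(v : V) Deltaf_inf E p U.1 [set v] U.2.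

Definition U_inf (E : {set edge}) (U : status) : {set status} :=
  [set terminate E psi U | psi in [set psi : realization | full E psi && prec U.2 psi]].

Definition alpha_inf (E : {set edge}) (p : edge -> R) (U : status) : R :=
  (\sum_(Us in U_inf E U) Prc p Us.2 U.2 * maxgain E p Us) / maxgain E p U.

(* statuses of the decision tree T of the (pi,k,d)-process: the initial
   status and every status observed with positive probability at a seeding step *)
Definition tree_statuses (E : {set edge}) (p : edge -> R) (pi : policy)
    (k d : nat) : {set status} :=
  [set U | (U == status0) ||
     [exists psi : realization, [exists i : 'I_k,
        [&& full E psi, 0 < Pr p psi & U == status_at E pi d psi i]]]].

Definition alphaT (E : {set edge}) (p : edge -> R) (pi : policy) (k d : nat) : R :=
  \big[Num.max/0]_(U in tree_statuses E p pi k d) alpha_inf E p U.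

End IC.

(* Main.v *)
Require Import Defs.
From HB Require Import structures.
From mathcomp Require Import all_boot all_order all_algebra.
From mathcomp Require Import reals sequences exp.
From mathcomp Require Import ring lra.
Import Order.TTheory GRing.Theory Num.Theory.
Local Open Scope ring_scope.

Set Implicit Arguments.
Unset Strict Implicit.
Unset Printing Implicit Defensive.

Section Main.
Variables (R : realType) (V : finType) (E : {set V * V}) (p : V * V -> R).
Hypothesis hp : forall e, e \in E -> 0 < p e <= 1.
Implicit Types (X Y : {set V}) (A B C : {set V * V}) (u v : V) (U : status V) (f g : {set V * V} -> status V -> status V).

Definition cw (e : V * V) (b : bool) : R :=
  if e \in E then (if b then p e else 1 - p e) else (if b then 0 else 1).
Definition W (A : {set V * V}) : R := \prod_e cw e (e \in A).
Definition mix (A B X : {set V * V}) := (A :&: X) :|: (B :\: X).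
Definition psiA (A : {set V * V}) : realization V := (A, E :\: A).

Lemma cw_ge0 e b : 0 <= cw e b.
Proof.
rewrite /cw; case: ifP => He; case: b => //.
- by have /andP[/ltW] := hp He.
- by have /andP[_] := hp He; rewrite subr_ge0.
Qed.

Lemma cwD e : cw e true + cw e false = 1.
Proof. by rewrite /cw; case: ifP => _; rewrite ?add0r // addrC subrK. Qed.

Lemma W_ge0 A : 0 <= W A.
Proof. by apply: prodr_ge0 => e _; apply: cw_ge0. Qed.

Lemma W_sum : \sum_A W A = 1.
Proof.
have -> : (1 : R) = \prod_(e : V * V) (cw e true + cw e false).
  by rewrite big1 // => e _; rewrite cwD.
rewrite bigA_distr.
apply: eq_bigr => J _; apply: eq_bigr => e _.
by case: (e \in J).
Qed.

Lemma W_sub A : W A != 0 -> A \subset E.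
Proof.
apply: contraR => /subsetPn [e eA eE].
rewrite /W (bigD1 e) //= /cw (negbTE eE) eA mul0r.
done.
Qed.

Lemma mixA (A B X : {set V * V}) e : e \in X -> (e \in mix A B X) = (e \in A).
Proof. by move=> H; rewrite !inE H /= andbT orbF. Qed.
Lemma mixN (A B X : {set V * V}) e : e \notin X -> (e \in mix A B X) = (e \in B).
Proof. by move=> H; rewrite !inE (negbTE H) /= andbF. Qed.

Lemma WW A B : W A * W B = \prod_e (cw e (e \in A) * cw e (e \in B)).
Proof. by rewrite big_split. Qed.

Lemma swapW (O : {set V * V} -> {set V * V}) (G : {set V * V} -> {set V * V} -> R) :
  (forall A A' : {set V * V}, (forall e, e \in O A -> (e \in A) = (e \in A')) -> O A' = O A) ->
  \sum_A \sum_B W A * W B * G A B =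
  \sum_A \sum_B W A * W B * G (mix A B (O A)) (mix B A (O A)).
Proof.
move=> hO.
pose h := fun x : {set V * V} * {set V * V} =>
  (mix x.1 x.2 (O x.1), mix x.2 x.1 (O x.1)).
have Oh : forall x, O (h x).1 = O x.1.
  by move=> x; apply: hO => e He; rewrite mixA.
have hh : forall x, h (h x) = x.
  case=> A B; rewrite /h /=.
  have -> : O (mix A B (O A)) = O A by apply: hO => e He; rewrite mixA.
  congr (_, _); apply/setP => e; case: (boolP (e \in O A)) => He;
    by rewrite ?(mixA _ _ He) ?(mixN _ _ He).
rewrite !pair_bigA (reindex_inj (can_inj hh)) /=.
apply: eq_bigr => x _.
congr (_ * _).
rewrite !WW; apply: eq_bigr => e _.
case: (boolP (e \in O x.1)) => He.
  by rewrite /h /= !(mixA _ _ He).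
by rewrite /h /= !(mixN _ _ He) mulrC.
Qed.


Lemma sumX (X Z : {set V * V}) : [disjoint Z & X] ->
  \sum_(J | J :\: X == Z) \prod_(e in X) cw e (e \in J) = 1.
Proof.
move=> dZX.
pose F i : R := if i \in X then cw i true else (i \in Z)%:R.
pose G i : R := if i \in X then cw i false else (i \notin Z)%:R.
have H1 : \prod_i (F i + G i) = 1.
  rewrite big1 // => i _; rewrite /F /G; case: (i \in X); first exact: cwD.
  by case: (boolP (i \in Z)) => _ /=; rewrite ?addr0 ?add0r.
rewrite -[RHS]H1.
rewrite bigA_distr [LHS]big_mkcond /=; apply: eq_bigr => J _.
case: eqP => HJ.
  rewrite [LHS]big_mkcond; apply: eq_bigr => i _; rewrite /F /G.
  case: (boolP (i \in X)) => iX; first by case: (i \in J).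
  have : (i \in J :\: X) = (i \in Z) by rewrite HJ.
  by rewrite inE iX /= => ->; case: (i \in Z).
have [i Hi] : exists i, (i \in J :\: X) != (i \in Z).
  apply/existsP; apply: contraT => /existsPn H.
  by case: HJ; apply/setP => j; apply/eqP; move: (H j); rewrite negbK.
have iX : i \notin X.
  apply/negP => iX; move: Hi; rewrite inE iX /=.
  by rewrite (disjointFl dZX iX).
rewrite (bigD1 i) //= /F /G (negbTE iX).
move: Hi; rewrite inE iX /=.
by case: (i \in J); case: (i \in Z); rewrite ?mul0r.
Qed.


Lemma prod3 (f : V * V -> R) (X Y Z : {set V * V}) :
  X \subset Y -> Y \subset Z ->
  \prod_(e in Z :\: X) f e = \prod_(e in Y :\: X) f e * \prod_(e in Z :\: Y) f e.
Proof.
move=> /subsetP XY /subsetP YZ.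
rewrite [LHS]big_mkcond [X in _ * X]big_mkcond [X in X * _]big_mkcond -big_split /=; apply: eq_bigr => e _.
have h1 := XY e; have h2 := YZ e.
rewrite !inE; move: h1 h2.
by case: (e \in X); case: (e \in Y); case: (e \in Z) => //= h1 h2;
  rewrite ?mulr1 ?mul1r //; (try by have := h1 isT); have := h2 isT.
Qed.

Lemma Prc_chain (phi phi' psi : realization V) :
  prec phi phi' -> prec phi' psi ->
  Prc p psi phi = Prc p phi' phi * Prc p psi phi'.
Proof.
move=> /andP[h1 h2] /andP[h3 h4].
by rewrite /Prc (prod3 _ h1 h3) (prod3 _ h2 h4) mulrACA.
Qed.


Lemma W0 (B : {set V * V}) : ~~ (B \subset E) -> W B = 0.
Proof. by move=> nB; apply/eqP; apply: contraNT nB; exact: W_sub. Qed.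

Lemma C1 (phi : realization V) (g : realization V -> R) :
  [disjoint phi.1 & phi.2] -> phi.1 :|: phi.2 \subset E ->
  \sum_(psi | full E psi && prec phi psi) Prc p psi phi * g psi =
  \sum_B W B * g (psiA (phi.1 :|: (B :\: (phi.1 :|: phi.2)))).
Proof.
case: phi => L0 D0 /= dis /subsetP sub.
set O := L0 :|: D0.
pose WN (C : {set V * V}) := \prod_(e in ~: O) cw e (e \in C).
pose Q (C : {set V * V}) := (C \subset E) && (C :&: O == L0).
have dL e : e \in D0 -> e \in L0 = false by move=> eD; rewrite (disjointFl dis eD).
have sL e : e \in L0 -> e \in E by move=> eL; apply: sub; rewrite inE eL.
have sD e : e \in D0 -> e \in E by move=> eD; apply: sub; rewrite inE eD orbT.
transitivity (\sum_(C | Q C) WN C * g (psiA C)).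
  rewrite (reindex_onto psiA fst); last first.
    case=> L D /andP[/andP[/= dLD /eqP uLD] _]; rewrite /psiA /=; congr (_, _).
    apply/setP => e; rewrite -uLD !inE; case: (boolP (e \in D)) => eD.
      by rewrite (disjointFl dLD eD).
    by rewrite orbF andNb.
  have EQ : forall C, (full E (psiA C) && prec (L0, D0) (psiA C)) && (fst (psiA C) == C) = Q C.
    move=> C; rewrite eqxx andbT /full /is_realization /prec /liveE /deadE /psiA /= /Q.
    apply/idP/idP.
      case/andP=> /andP[_ /eqP uC] /andP[/subsetP LC /subsetP DC].
      apply/andP; split.
        by apply/subsetP => e eC; rewrite -uC inE eC.
      apply/eqP/setP => e; rewrite !inE.
      case: (boolP (e \in L0)) => eL; first by rewrite (LC _ eL).
      case: (boolP (e \in D0)) => eD; last by rewrite andbF.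
      by have := DC _ eD; rewrite inE => /andP[/negbTE ->].
    case/andP=> /subsetP CE /eqP CO.
    have hC e : (e \in L0) = (e \in C) && (e \in O) by rewrite -CO inE.
    apply/andP; split; first (apply/andP; split).
    - by rewrite disjoints_subset; apply/subsetP => e; rewrite !inE => ->.
    - apply/eqP/setP => e; rewrite !inE.
      by case: (boolP (e \in C)) => eC //=; rewrite (CE _ eC).
    - apply/andP; split; apply/subsetP => e.
        by rewrite hC => /andP[].
      move=> eD; rewrite inE (sD _ eD) andbT; apply/negP => eC.
      by move: (dL _ eD); rewrite hC eC inE eD orbT.
  apply: eq_big => [C|C]; first exact: EQ.
  rewrite EQ => /andP[/subsetP CE /eqP CO].
  have hC e : (e \in L0) = (e \in C) && (e \in O) by rewrite -CO inE.
  congr (_ * _).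
  rewrite /Prc /liveE /deadE /psiA /= /WN.
  rewrite [X in X * _]big_mkcond [X in _ * X]big_mkcond [RHS]big_mkcond -big_split /=.
  apply: eq_bigr => e _.
  have h1 := hC e; have h2 := CE e; have h3 := dL e; have h4 := sL e; have h5 := sD e.
  rewrite /cw !inE; move: h1 h2 h3 h4 h5; rewrite /O !inE.
  case: (e \in L0); case: (e \in D0); case: (e \in C); case: (e \in E) => //=;
    rewrite ?mulr1 ?mul1r //.
  by move=> _ /(_ isT).
rewrite [RHS](bigID (fun B : {set V * V} => B \subset E)) /= [X in _ = _ + X]big1 ?addr0; last first.
  by move=> B nB; rewrite W0 ?mul0r.
rewrite [RHS](partition_big (fun B : {set V * V} => L0 :|: (B :\: O)) Q); last first.
  move=> B /subsetP BE; rewrite /Q; apply/andP; split.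
    apply/subsetP => e; rewrite !inE => /orP[/sL //|/andP[_ eB]]; exact: BE.
  apply/eqP/setP => e; rewrite /O !inE.
  by case: (boolP (e \in L0)) => eL; case: (boolP (e \in D0)) => eD //=; rewrite ?andbF.
apply: eq_bigr => C /andP[/subsetP CE /eqP CO].
have hC e : (e \in L0) = (e \in C) && (e \in O) by rewrite -CO inE.
rewrite (eq_bigr (fun B => W B * g (psiA C))); last by move=> B /andP[_ /eqP ->].
rewrite -big_distrl /=; congr (_ * _).
rewrite (eq_bigl (fun B => B :\: O == C :\: O)); last first.
  move=> B; apply/idP/idP.
    case/andP => _ /eqP <-; apply/eqP/setP => e; rewrite /O !inE.
    by case: (e \in L0); case: (e \in D0); case: (e \in B).
  move=> /eqP HB.
  have hB e : e \notin O -> (e \in B) = (e \in C).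
    move=> eO; have := congr1 (fun S : {set V * V} => e \in S) HB.
    by rewrite /= !in_setD eO /=.
  apply/andP; split.
    apply/subsetP => e eB; case: (boolP (e \in O)) => eO; first exact: sub.
    by apply: CE; rewrite -hB.
  apply/eqP/setP => e; rewrite inE hC.
  case: (boolP (e \in O)) => eO; first by rewrite andbT inE eO /= orbF.
  by rewrite andbF /= inE eO /= hB.
symmetry; transitivity (\sum_(B | B :\: O == C :\: O) (\prod_(e in O) cw e (e \in B)) * WN C).
  apply: eq_bigr => B /eqP HB; rewrite /W (bigID (fun e => e \in O)) /=.
  rewrite /WN; congr (_ * _); apply: eq_big => [e|e]; first by rewrite in_setC.
  move=> eO; congr cw.
  have := congr1 (fun S : {set V * V} => e \in S) HB.
  by rewrite /= !in_setD eO /=.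
rewrite -big_distrl /= sumX ?mul1r //.
by rewrite disjoints_subset; apply/subsetP => e; rewrite !inE => /andP[->].
Qed.


Definition Rch (X : {set V}) (A : {set V * V}) : {set V} := A_t None X (psiA A).

Lemma inRch X A v :
  (v \in Rch X A) = [exists u in X, connect (fun x y => (x, y) \in A) u v].
Proof. by rewrite /Rch /A_t inE. Qed.

Lemma R1 X A : X \subset Rch X A.
Proof. by apply/subsetP => u uX; rewrite inRch; apply/existsP; exists u; rewrite uX connect0. Qed.

Lemma R1c X A u v : u \in Rch X A -> (u, v) \in A -> v \in Rch X A.
Proof.
rewrite !inRch => /existsP[w /andP[wX c]] uv; apply/existsP; exists w.
by rewrite wX (connect_trans c) // connect1.
Qed.

Lemma R2 X Y A : X \subset Y -> (forall u v, u \in Y -> (u, v) \in A -> v \in Y) ->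
  Rch X A \subset Y.
Proof.
move=> /subsetP XY cl; apply/subsetP => v; rewrite inRch => /existsP[u /andP[uX /connectP[s ps ->]]].
have : u \in Y by exact: XY.
elim: s u ps {uX} => [//|x s IH] u /= /andP[ux ps] uY.
by apply: IH ps _; apply: cl ux.
Qed.

Lemma RU X Y A : Rch (X :|: Y) A = Rch X A :|: Rch Y A.
Proof.
apply/setP => v; rewrite in_setU !inRch; apply/existsP/orP.
  by case=> u /andP[]; rewrite inE => /orP[] uX c; [left|right]; apply/existsP; exists u; rewrite uX.
by case=> /existsP[u /andP[uX c]]; exists u; rewrite inE uX ?orbT.
Qed.

Lemma Rmono X Y A : X \subset Y -> Rch X A \subset Rch Y A.
Proof. by move=> XY; rewrite -(setUidPr XY) RU subsetUl. Qed.

Lemma Rsub X Y A : X \subset Y -> Y \subset Rch X A -> Rch Y A = Rch X A.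
Proof.
move=> XY YR; apply/eqP; rewrite eqEsubset (Rmono A XY) andbT.
by apply: R2 => // u v; apply: R1c.
Qed.

Lemma Rloc X A (A' : {set V * V}) : (forall e, e.1 \in Rch X A -> (e \in A) = (e \in A')) ->
  Rch X A' = Rch X A.
Proof.
move=> ag; apply/eqP; rewrite eqEsubset; apply/andP; split.
  apply: R2; first exact: R1.
  by move=> u v uR uv; apply: (R1c uR); rewrite (ag (u, v) uR).
have : Rch X A \subset Rch X A' :&: Rch X A.
  apply: R2; first by rewrite subsetI !R1.
  move=> u v; rewrite inE => /andP[u1 u2] uv; rewrite inE (R1c u2 uv) andbT.
  by apply: R1c u1 _; rewrite -(ag (u, v)).
by rewrite subsetI => /andP[].
Qed.

Lemma cardUD (X Y : {set V}) : #|X :|: Y| = #|X| + #|Y :\: X|.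
Proof.
rewrite -(cardsID X (X :|: Y)); congr (_ + _); apply: eq_card => v; rewrite !inE.
  by case: (v \in X); rewrite ?andbF.
by case: (v \in X).
Qed.


Definition obs (U : status V) : {set V * V} := U.2.1 :|: U.2.2.
Definition rnd A (U : status V) : status V := round E (psiA A) U.
Definition attE (U : status V) : {set V * V} :=
  [set e in E | [&& e.1 \in U.1, e.2 \notin U.1, e \notin U.2.1 & e \notin U.2.2]].

Lemma rndE A U : rnd A U =
  (U.1 :|: [set e.2 | e in attE U :&: A],
   (U.2.1 :|: (attE U :&: A), U.2.2 :|: (attE U :\: A))).
Proof. by []. Qed.

Definition Mono (f : {set V * V} -> status V -> status V) :=
  forall A U, [/\ U.1 \subset (f A U).1, U.2.1 \subset (f A U).2.1 &
                  U.2.2 \subset (f A U).2.2].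
Definition Loc (f : {set V * V} -> status V -> status V) :=
  forall (A A' : {set V * V}) U,
    (forall e, e \in obs (f A U) -> (e \in A) = (e \in A')) -> f A' U = f A U.
Definition InvS (U : status V) :=
  [/\ obs U \subset E, {in U.2.1, forall e, e.2 \in U.1},
      {in obs U, forall e, e.1 \in U.1} & [disjoint U.2.1 & U.2.2]].
Definition Tru A (U : status V) := (U.2.1 \subset A) && [disjoint U.2.2 & A].
Definition Good (f : {set V * V} -> status V -> status V) :=
  [/\ Mono f, Loc f, forall A U, InvS U -> InvS (f A U) &
      forall A U, Tru A U -> Tru A (f A U)].

Lemma obs_mono (U U' : status V) : U.2.1 \subset U'.2.1 -> U.2.2 \subset U'.2.2 ->
  obs U \subset obs U'.
Proof. by move=> h1 h2; apply: setUSS. Qed.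

Lemma Good_id : Good (fun A U => U).
Proof. by split => // A U; split. Qed.

Lemma Good_comp f g : Good f -> Good g -> Good (fun A U => g A (f A U)).
Proof.
move=> [mf lf if_ tf] [mg lg ig tg]; split.
- move=> A U; have [a1 a2 a3] := mf A U; have [b1 b2 b3] := mg A (f A U).
  by split; [apply: subset_trans b1|apply: subset_trans b2|apply: subset_trans b3].
- move=> A A' U ag.
  have ef : f A' U = f A U.
    apply: lf => e eo; apply: ag; have [_ b2 b3] := mg A (f A U).
    by apply: (subsetP (obs_mono b2 b3)).
  by rewrite ef; apply: lg.
- by move=> A U /if_ /ig.
- by move=> A U /tf /tg.
Qed.

Lemma Good_iter f n : Good f -> Good (fun A U => iter n (f A) U).
Proof.
move=> Gf; elim: n => [|n IH]; first exact: Good_id.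
exact: (Good_comp IH Gf).
Qed.

Lemma Good_rnd : Good rnd.
Proof.
split.
- by move=> A U; rewrite rndE /=; split; apply: subsetUl.
- move=> A A' U ag; rewrite !rndE.
  have h : forall e, e \in attE U -> (e \in A) = (e \in A').
    by move=> e ea; apply: ag; rewrite rndE /obs /= !in_setU in_setI in_setD ea; case: (e \in A); rewrite ?orbT.
  have e1 : attE U :&: A' = attE U :&: A.
    by apply/setP => e; rewrite !in_setI; case: (boolP (e \in attE U)) => ea //=; rewrite (h e ea).
  have e2 : attE U :\: A' = attE U :\: A.
    by apply/setP => e; rewrite !in_setD; case: (boolP (e \in attE U)) => ea; rewrite ?andbF // (h e ea).
  by rewrite e1 e2.
- move=> A [S [L D]] [/= oE hd tl dj]; rewrite rndE /=.
  have iA e : e \in attE (S, (L, D)) ->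
      [/\ e \in E, e.1 \in S, e.2 \notin S, e \notin L & e \notin D].
    by rewrite inE => /andP[-> /and4P[-> -> -> ->]].
  have dLD e : e \in L -> e \in D -> False.
    by move=> eL eD; move: dj; rewrite -setI_eq0 => /eqP/setP/(_ e); rewrite !inE eL eD.
  split => /=.
  + apply/subsetP => e; rewrite /obs /= !in_setU in_setI in_setD.
    case/orP => [/orP[eL|/andP[/iA[]]]|/orP[eD|/andP[_ /iA[]]]] //.
    * by apply: (subsetP oE); rewrite in_setU eL.
    * by apply: (subsetP oE); rewrite in_setU eD orbT.
  + move=> e; rewrite !in_setU in_setI => /orP[eL|/andP[ea eA]].
      by rewrite hd.
    by apply/orP; right; apply/imsetP; exists e => //; rewrite in_setI ea.
  + move=> e; rewrite /obs /= !in_setU in_setI in_setD.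
    case/orP => [/orP[eL|/andP[/iA[_ h _ _ _] _]]|/orP[eD|/andP[_ /iA[_ h _ _ _]]]].
    * by rewrite tl // /obs in_setU eL.
    * by rewrite h.
    * by rewrite tl // /obs in_setU eD orbT.
    * by rewrite h.
  + rewrite -setI_eq0; apply/eqP/setP => e; rewrite in_set0 in_setI !in_setU in_setI in_setD.
    case: (boolP (e \in attE (S, (L, D)))) => ea /=.
      have [_ _ _ /negbTE -> /negbTE ->] := iA e ea.
      by case: (e \in A).
    rewrite !andbF !orbF; apply/negP => /andP[eL eD].
    exact: (dLD e eL eD).
- move=> A [S [L D]] /andP[/= LA dDA]; rewrite rndE /=; apply/andP; split.
    by rewrite subUset LA subsetIr.
  rewrite -setI_eq0; apply/eqP/setP => e; rewrite !inE.
  case: (boolP (e \in A)) => eA; rewrite ?andbF ?andbT //= ?orbF.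
  by move: dDA; rewrite -setI_eq0 => /eqP/setP/(_ e); rewrite !inE eA andbT.
Qed.


Definition sd (pi : policy V) A U : status V := (pi U |: U.1, U.2).

Lemma Good_sd pi : Good (sd pi).
Proof.
split.
- by move=> A U; split => //; apply: subsetUr.
- by [].
- move=> A [S [L D]] [/= oE hd tl dj]; split => //= e eo.
    by rewrite in_setU hd ?orbT.
  by rewrite in_setU tl ?orbT.
- by [].
Qed.

Lemma Good_so pi d : Good (fun A U => seed_observe E pi d (psiA A) U).
Proof. exact: (Good_comp (Good_sd pi) (Good_iter d Good_rnd)). Qed.

Lemma Good_st pi d i :
  Good (fun A U => iter i (seed_observe E pi d (psiA A)) U).
Proof. exact: (Good_iter i (Good_so pi d)). Qed.

Lemma Good_term : Good (fun A U => terminate E (psiA A) U).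
Proof. exact: (Good_iter _ Good_rnd). Qed.

Lemma rnd_sub A U : (rnd A U).1 \subset Rch U.1 A.
Proof.
rewrite rndE /=; apply/subsetP => v; rewrite in_setU => /orP[vS|/imsetP[e]].
  exact: (subsetP (R1 _ _)).
rewrite in_setI => /andP[ea eA] ->.
move: ea; rewrite inE => /andP[_ /and4P[e1 _ _ _]].
by apply: (R1c (subsetP (R1 _ _) _ e1)); rewrite -surjective_pairing.
Qed.

Lemma rnd_Rch A U : Rch (rnd A U).1 A = Rch U.1 A.
Proof. by apply: Rsub; [rewrite rndE subsetUl | exact: rnd_sub]. Qed.

Lemma iter_Rch n A U : Rch (iter n (rnd A) U).1 A = Rch U.1 A.
Proof. by elim: n => //= n IH; rewrite -/(rnd A _) rnd_Rch. Qed.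

Lemma so_Rch pi d A U :
  Rch (seed_observe E pi d (psiA A) U).1 A = Rch (pi U |: U.1) A.
Proof. exact: (iter_Rch d A (sd pi A U)). Qed.

Lemma rnd_obs A U : obs (rnd A U) = obs U :|: attE U.
Proof.
rewrite rndE /obs /=; apply/setP => e; rewrite !in_setU in_setI in_setD.
by case: (e \in attE U); case: (e \in A); rewrite /= ?orbT ?orbF // orbC -!orbA ?orbT.
Qed.

Lemma rnd_fix A U : attE U = set0 -> rnd A U = U.
Proof. by move=> h; rewrite rndE h set0I imset0 setU0 set0D !setU0; case: U h => ? []. Qed.

Lemma rnd_close A U u v : A \subset E -> InvS U -> Tru A U ->
  u \in U.1 -> (u, v) \in A -> v \in (rnd A U).1.
Proof.
move=> /subsetP AE [oE hd tl dj] /andP[LA dDA] uS uvA.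
rewrite rndE /= in_setU; case: (boolP (v \in U.1)) => //= vS.
apply/imsetP; exists (u, v) => //; rewrite in_setI uvA andbT inE AE //= uS vS /=.
apply/andP; split.
  by apply/negP => /hd /= vS'; rewrite vS' in vS.
apply/negP => uvD; move: dDA; rewrite -setI_eq0 => /eqP/setP/(_ (u, v)).
by rewrite !inE uvD uvA.
Qed.

Lemma inattE e U : (e \in attE U) =
  (e \in E) && [&& e.1 \in U.1, e.2 \notin U.1, e \notin U.2.1 & e \notin U.2.2].
Proof. by rewrite inE. Qed.

Lemma rnd_stable A U : (rnd A U).1 = U.1 -> attE (rnd A U) = set0.
Proof.
move=> h; apply/setP => e; rewrite in_set0; apply/negP => ea.
move: (ea); rewrite inattE => /andP[eE /and4P[e1 e2 n1 n2]].
have : e \notin obs (rnd A U) by rewrite /obs in_setU negb_or n1 n2.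
rewrite rnd_obs in_setU negb_or => /andP[no na].
move: na; rewrite inattE eE -h e1 e2 /=.
by move: no; rewrite /obs in_setU negb_or => /andP[-> ->].
Qed.

Lemma term_prop A U : A \subset E -> InvS U -> Tru A U ->
  (terminate E (psiA A) U).1 = Rch U.1 A /\ attE (terminate E (psiA A) U) = set0.
Proof.
move=> AE IU TU.
pose X j := iter j (rnd A) U.
have IX : forall j, InvS (X j) /\ Tru A (X j).
  by move=> j; have [_ _ hi ht] := Good_iter j Good_rnd; split; [apply: hi | apply: ht].
have mono : forall j, (X j).1 \subset (X j.+1).1.
  by move=> j; change ((X j).1 \subset (rnd A (X j)).1); rewrite rndE subsetUl.
have [i ile hi] : exists2 i, (i <= #|V|)%N & (X i.+1).1 = (X i).1.
  case: (boolP [exists i : 'I_#|V|.+1, (X i.+1).1 == (X i).1]).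
    by move/existsP => [i /eqP h]; exists i => //; rewrite -ltnS.
  move/existsPn => H; exfalso.
  have : forall j, (j <= #|V|.+1 -> j <= #|(X j).1|)%N.
    elim=> // j IHj jle.
    have := IHj (ltnW jle); move=> h1.
    have := H (Ordinal jle) => /= neq.
    have pr : (X j).1 \proper (X j.+1).1 by rewrite properEneq eq_sym neq mono.
    exact: leq_ltn_trans h1 (proper_card pr).
  by move/(_ #|V|.+1 (leqnn _)); rewrite leqNgt ltnS max_card.
have fix1 : forall m, X (m + i.+1)%N = X i.+1.
  have st : attE (X i.+1) = set0 by apply: rnd_stable.
  elim=> // m IHm; rewrite addSn.
  by change (rnd A (X (m + i.+1)%N) = X i.+1); rewrite IHm rnd_fix.
have eT : terminate E (psiA A) U = X i.+1.
  have -> : terminate E (psiA A) U = X #|V|.+1 by [].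
  by rewrite -(subnK (ile : (i < #|V|.+1)%N)) fix1.
rewrite eT; split; last by apply: rnd_stable.
apply/eqP; rewrite eqEsubset; apply/andP; split.
  by rewrite -(iter_Rch i.+1 A U) -/(X i.+1); apply: R1.
apply: R2.
  by have [hm _ _ _] := Good_iter i.+1 Good_rnd; have [] := hm A U.
move=> u v uS uv; rewrite hi in uS.
by have [I1 T1] := IX i; apply: (rnd_close AE I1 T1 uS uv).
Qed.


Lemma tower (T : Type) (Uf : {set V * V} -> T) (O : T -> {set V * V})
    (h : T -> {set V * V} -> R) :
  (forall A (A' : {set V * V}), (forall e, e \in O (Uf A) -> (e \in A) = (e \in A')) ->
     Uf A' = Uf A) ->
  \sum_A W A * h (Uf A) A =
  \sum_A W A * \sum_B W B * h (Uf A) (mix A B (O (Uf A))).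
Proof.
move=> stop.
have ag A B : forall e, e \in O (Uf A) -> (e \in A) = (e \in mix A B (O (Uf A))).
  by move=> e eO; rewrite mixA.
transitivity (\sum_A \sum_B W A * W B * h (Uf A) A).
  apply: eq_bigr => A _; rewrite -[LHS]mulr1 -W_sum big_distrr /=.
  by apply: eq_bigr => B _; rewrite mulrAC.
rewrite [RHS](eq_bigr (fun A => \sum_B W A * W B * h (Uf A) (mix A B (O (Uf A))))); last first.
  by move=> A _; rewrite big_distrr /=; apply: eq_bigr => B _; rewrite mulrA.
rewrite (@swapW (fun A : {set V * V} => O (Uf A)) (fun A B : {set V * V} => h (Uf A) (mix A B (O (Uf A))))); last first.
  by move=> A A' H; rewrite (stop A A' H).
apply: eq_bigr => A _; apply: eq_bigr => B _.
rewrite (stop A (mix A B (O (Uf A))) (ag A B)).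
congr (_ * h _ _); apply/setP => e; case: (boolP (e \in O (Uf A))) => eO.
  by rewrite (mixA _ _ eO) (mixA _ _ eO).
by rewrite (mixN _ _ eO) (mixN _ _ eO).
Qed.

Lemma eqW (F G : {set V * V} -> R) : (forall A, A \subset E -> F A = G A) ->
  \sum_A W A * F A = \sum_A W A * G A.
Proof.
move=> h; apply: eq_bigr => A _; case: (boolP (A \subset E)) => AE.
  by rewrite h.
by rewrite W0 // !mul0r.
Qed.

Lemma leW (F G : {set V * V} -> R) : (forall A, A \subset E -> W A != 0 -> F A <= G A) ->
  \sum_A W A * F A <= \sum_A W A * G A.
Proof.
move=> h; apply: ler_sum => A _; case: (boolP (W A == 0)) => [/eqP ->|nz].
  by rewrite !mul0r.
by apply: ler_wpM2l; [exact: W_ge0 | apply: h => //; exact: W_sub].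
Qed.

Lemma full_psiA A : A \subset E -> full E (psiA A).
Proof.
move=> AE; rewrite /full /is_realization /psiA /liveE /deadE /=; apply/andP; split.
  by rewrite disjoints_subset; apply/subsetP => e; rewrite !inE => ->.
by apply/eqP/setP => e; rewrite !inE; case: (boolP (e \in A)) => eA //=; rewrite (subsetP AE).
Qed.

Lemma full_eq (psi : realization V) : full E psi -> psi = psiA psi.1.
Proof.
case: psi => L D /andP[/= dLD /eqP uLD]; rewrite /psiA /=; congr (_, _).
apply/setP => e; rewrite -uLD !inE; case: (boolP (e \in D)) => eD.
  by rewrite (disjointFl dLD eD).
by rewrite orbF andNb.
Qed.

Lemma full_sub (psi : realization V) : full E psi -> psi.1 \subset E.
Proof. by case: psi => L D /andP[_ /eqP <-]; apply: subsetUl. Qed.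

Lemma Pr_W A : A \subset E -> Pr p (psiA A) = W A.
Proof.
move=> /subsetP AE; rewrite /Pr /Prc /psiA /liveE /deadE /phi_empty /= !setD0 /W.
rewrite [X in X * _]big_mkcond [X in _ * X]big_mkcond -big_split /=.
apply: eq_bigr => e _; rewrite /cw !inE; have := AE e.
by case: (e \in A); case: (e \in E) => //= h; rewrite ?mulr1 ?mul1r //; have := h isT.
Qed.

Lemma status0_inv A : InvS (status0 V) /\ Tru A (status0 V).
Proof.
split; first split => //=.
- by rewrite /obs /= setU0 sub0set.
- by move=> e; rewrite inE.
- by move=> e; rewrite /obs /= setU0 inE.
- by rewrite disjoints_subset sub0set.
by rewrite /Tru /= sub0set disjoints_subset sub0set.
Qed.

Lemma mixU A U : InvS U -> Tru A U -> forall B,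
  U.2.1 :|: (B :\: obs U) = mix A B (obs U).
Proof.
move=> [_ _ _ dj] /andP[LA dDA] B.
have nA : forall e, e \in U.2.2 -> (e \in A) = false.
  move=> e eD; apply/negP => eA; move: dDA; rewrite -setI_eq0 => /eqP/setP/(_ e).
  by rewrite in_setI in_set0 eD eA.
apply/setP => e; rewrite /mix /obs !in_setU !in_setD !in_setI !in_setU.
case: (boolP (e \in U.2.1)) => eL /=; first by rewrite (subsetP LA).
case: (boolP (e \in U.2.2)) => eD /=; first by rewrite (nA e eD).
by rewrite andbF.
Qed.


Definition Dl X v C : R := (#|Rch (X :|: [set v]) C|)%:R - (#|Rch X C|)%:R.
Definition mg U : R := maxgain E p U.

Lemma Dl_ge0 X v C : 0 <= Dl X v C.
Proof. by rewrite subr_ge0 ler_nat subset_leq_card // Rmono // subsetUl. Qed.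

Lemma mg_ge0 U : 0 <= mg U.
Proof. exact: bigmax_ge_id. Qed.

Lemma le_mg U v : Deltaf_inf E p U.1 [set v] U.2 <= mg U.
Proof. exact: (le_bigmax _ (fun v => Deltaf_inf E p U.1 [set v] U.2) v). Qed.

Lemma Dl_W A U v : A \subset E -> InvS U -> Tru A U ->
  Deltaf_inf E p U.1 [set v] U.2 = \sum_B W B * Dl U.1 v (mix A B (obs U)).
Proof.
move=> AE IU TU; have [oE _ _ dj] := IU.
rewrite /Deltaf_inf /Deltaf_t (@C1 U.2 (fun psi => @Delta_t R V None U.1 [set v] psi) dj oE).
by apply: eq_bigr => B _; rewrite (mixU IU TU).
Qed.

Lemma Deltaf_ge0 A U v : A \subset E -> InvS U -> Tru A U ->
  0 <= Deltaf_inf E p U.1 [set v] U.2.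
Proof.
move=> AE IU TU; rewrite (Dl_W v AE IU TU); apply: sumr_ge0 => B _.
by apply: mulr_ge0; [exact: W_ge0 | exact: Dl_ge0].
Qed.

Lemma mg_greedy (pig : policy V) A U : greedy E p pig -> A \subset E -> InvS U -> Tru A U ->
  mg U = Deltaf_inf E p U.1 [set pig U] U.2.
Proof.
move=> hg AE IU TU; apply/le_anti/andP; split; last exact: le_mg.
apply: bigmax_le; first exact: (Deltaf_ge0 _ AE IU TU).
by move=> v _; apply: hg.
Qed.

Lemma Tru_prec A U : A \subset E -> InvS U -> Tru A U = prec U.2 (psiA A).
Proof.
move=> AE [oE _ _ _]; rewrite /Tru /prec /psiA /liveE /deadE /=; congr (_ && _).
apply/idP/idP.
  move=> dj; apply/subsetP => e eD; rewrite in_setD.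
  have -> : e \in E by apply: (subsetP oE); rewrite in_setU eD orbT.
  by rewrite andbT; apply/negP => eA; move: dj; rewrite -setI_eq0 => /eqP/setP/(_ e); rewrite in_setI in_set0 eD eA.
move=> /subsetP sD; rewrite -setI_eq0; apply/eqP/setP => e; rewrite in_setI in_set0.
by apply/negP => /andP[/sD]; rewrite in_setD => /andP[/negbTE ->].
Qed.

Lemma Fval_W (pi : policy V) k d :
  Fval E p pi k d = \sum_A W A * (#|Rch (status_at E pi d (psiA A) k).1 A|)%:R.
Proof.
rewrite /Fval.
rewrite (eq_bigl (fun psi => full E psi && prec (phi_empty V) psi)); last first.
  by move=> psi; rewrite /prec /phi_empty /liveE /deadE /= !sub0set !andbT.
have dj : [disjoint (phi_empty V).1 & (phi_empty V).2] by rewrite disjoints_subset sub0set.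
have sb : (phi_empty V).1 :|: (phi_empty V).2 \subset E by rewrite /= setU0 sub0set.
rewrite (@C1 (phi_empty V) (fun psi => (#|(final_status E pi k d psi).1|)%:R) dj sb).
apply: eqW => A AE.
have -> : (phi_empty V).1 :|: (A :\: ((phi_empty V).1 :|: (phi_empty V).2)) = A.
  by apply/setP => e; rewrite !inE.
congr (_%:R); congr (#|_|).
have [I0 T0] := status0_inv A.
have [_ _ hi ht] := Good_st pi d k.
by have [-> _] := term_prop AE (hi A _ I0) (ht A _ T0).
Qed.


Definition Num U : R := \sum_(Us in U_inf E U) Prc p Us.2 U.2 * mg Us.

Lemma prec_trans (a b c : realization V) : prec a b -> prec b c -> prec a c.
Proof.
rewrite /prec => /andP[h1 h2] /andP[h3 h4]; apply/andP; split; [exact: subset_trans h1 h3 | exact: subset_trans h2 h4].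
Qed.

Lemma sum_Prc1 (phi : realization V) : [disjoint phi.1 & phi.2] -> phi.1 :|: phi.2 \subset E ->
  \sum_(psi | full E psi && prec phi psi) Prc p psi phi = 1.
Proof.
move=> dj sb.
rewrite (eq_bigr (fun psi => Prc p psi phi * (fun _ => 1) psi)); last by move=> *; rewrite mulr1.
rewrite (@C1 phi (fun _ => 1) dj sb).
under eq_bigr do rewrite mulr1.
exact: W_sum.
Qed.

Lemma G1 U : InvS U ->
  Num U = \sum_(psi | full E psi && prec U.2 psi) Prc p psi U.2 * mg (terminate E psi U).
Proof.
move=> IU; rewrite /Num /U_inf.
set P := [set psi | full E psi && prec U.2 psi].
rewrite [RHS](eq_bigl (fun psi => psi \in P)); last by move=> psi; rewrite inE.
rewrite [RHS](partition_big_imset (fun psi => terminate E psi U)).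
apply: eq_bigr => Us /imsetP[psi0 psi0P ->].
set T := terminate E psi0 U.
rewrite (eq_bigr (fun psi => Prc p psi U.2 * mg T)); last by move=> psi /andP[_ /eqP ->].
rewrite -big_distrl /=; congr (_ * _).
move: psi0P; rewrite inE => /andP[f0 pr0].
have A0E := full_sub f0.
have e0 := full_eq f0.
have [GTm GTl GTi GTt] := Good_term.
have TU0 : Tru psi0.1 U by rewrite (Tru_prec A0E IU) -e0.
have eT : T = terminate E (psiA psi0.1) U by rewrite /T {1}e0.
have IT : InvS T by rewrite eT; apply: GTi.
have TT : Tru psi0.1 T by rewrite eT; apply: GTt.
have pT0 : prec T.2 psi0 by rewrite e0 -Tru_prec.
have pUT : prec U.2 T.2.
  by rewrite eT; have [_ h1 h2] := GTm psi0.1 U; rewrite /prec h1 h2.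
rewrite (eq_bigl (fun psi => full E psi && prec T.2 psi)); last first.
  move=> psi; rewrite inE; apply/idP/idP.
    case/andP => /andP[fp pp] /eqP tp; rewrite fp andTb.
    have AE := full_sub fp; have ep := full_eq fp.
    have TUp : Tru psi.1 U by rewrite (Tru_prec AE IU) -ep.
    rewrite -tp ep; rewrite -Tru_prec //; first exact: GTt.
    exact: GTi.
  case/andP => fp pp; rewrite fp (prec_trans pUT pp) /=.
  have AE := full_sub fp; have ep := full_eq fp.
  apply/eqP; rewrite ep eT; apply: GTl => e; rewrite -eT /obs in_setU.
  move: pT0 pp; rewrite {1}e0 {1}ep /prec /psiA /liveE /deadE /=.
  move=> /andP[/subsetP s1 /subsetP s2] /andP[/subsetP s3 /subsetP s4].
  case/orP => [eL|eD]; first by rewrite (s1 _ eL) (s3 _ eL).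
  by move: (s2 _ eD) (s4 _ eD); rewrite !in_setD => /andP[/negbTE -> _] /andP[/negbTE -> _].
rewrite (eq_bigr (fun psi => Prc p T.2 U.2 * Prc p psi T.2)); last first.
  by move=> psi /andP[_ pp]; apply: Prc_chain.
rewrite -big_distrr /= sum_Prc1 ?mulr1 //.
  by have [] := IT.
by have [] := IT.
Qed.


Definition st (pi : policy V) d i A : status V := status_at E pi d (psiA A) i.

Lemma st_stop pi d i A (A' : {set V * V}) :
  (forall e, e \in obs (st pi d i A) -> (e \in A) = (e \in A')) -> st pi d i A' = st pi d i A.
Proof. by have [_ hl _ _] := Good_st pi d i; apply: hl. Qed.

Lemma st_inv pi d i A : InvS (st pi d i A) /\ Tru A (st pi d i A).
Proof.
have [_ _ hi ht] := Good_st pi d i; have [I0 T0] := status0_inv A.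
by split; [apply: hi | apply: ht].
Qed.

Lemma st_Rch pi d i A :
  Rch (st pi d i.+1 A).1 A = Rch ((st pi d i A).1 :|: [set pi (st pi d i A)]) A.
Proof. by rewrite setUC; apply: (so_Rch pi d A (st pi d i A)). Qed.

Definition Gs (pi : policy V) d i : R := \sum_A W A * (#|Rch (st pi d i A).1 A|)%:R.

Lemma incr (pig : policy V) d i : greedy E p pig ->
  \sum_A W A * mg (st pig d i A) = Gs pig d i.+1 - Gs pig d i.
Proof.
move=> hg.
rewrite (eqW (G := fun A => \sum_B W B * Dl (st pig d i A).1 (pig (st pig d i A))
                                  (mix A B (obs (st pig d i A))))); last first.
  move=> A AE; have [I T] := st_inv pig d i A.
  by rewrite (mg_greedy hg AE I T) (Dl_W _ AE I T).
rewrite -(@tower _ (st pig d i) obs (fun U C => Dl U.1 (pig U) C)); last first.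
  by move=> A A' H; apply: st_stop.
rewrite /Gs -sumrB; apply: eq_bigr => A _; rewrite -mulrBr; congr (_ * _).
by rewrite st_Rch.
Qed.


Definition Out (T : {set V}) : {set V * V} := [set e | e.1 \in T].

Lemma inOut e (T : {set V}) : (e \in Out T) = (e.1 \in T).
Proof. by rewrite inE. Qed.

Lemma DlE X v C : Dl X v C = (#|Rch [set v] C :\: Rch X C|)%:R.
Proof. by rewrite /Dl RU cardUD natrD [X in X - _]addrC addrK. Qed.

Lemma KP A B (Tm : status V) S X w : A \subset E -> B \subset E -> InvS Tm ->
  attE Tm = set0 -> Tm.1 = Rch S A -> S \subset X ->
  Dl X w (mix A B (Out (Rch X A))) <= Dl Tm.1 w (mix A B (obs Tm)).
Proof.
move=> AE /subsetP BE [_ _ tl _] at0 hR SX.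
set Bs := Rch X A; set C1 := mix A B (Out Bs); set C2 := mix A B (obs Tm).
have RsB : Tm.1 \subset Bs by rewrite hR Rmono.
have ha : Rch X C1 = Bs.
  by apply: Rloc => e e1; rewrite /C1 mixA // inOut.
have hb : Rch Tm.1 C2 = Tm.1.
  apply/eqP; rewrite eqEsubset R1 andbT; apply: R2 => // u v uT uv.
  case: (boolP ((u, v) \in obs Tm)) => uo.
    by move: uv; rewrite /C2 (mixA _ _ uo) => uv; rewrite hR; apply: (R1c (u := u)); rewrite -?hR.
  move: uv; rewrite /C2 (mixN _ _ uo) => uvB.
  apply/negPn/negP => vT.
  have : (u, v) \in attE Tm.
    rewrite inattE BE //= uT vT /=.
    by move: uo; rewrite /obs in_setU negb_or.
  by rewrite at0 in_set0.
have hd : Rch [set w] C1 \subset Rch [set w] C2 :|: Bs.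
  apply: R2; first by apply: subset_trans (R1 _ _) (subsetUl _ _).
  move=> u v; rewrite in_setU => /orP[uR|uB] uv.
    case: (boolP (u \in Bs)) => uB.
      move: uv; rewrite /C1 mixA ?inOut // => uv.
      by rewrite in_setU (R1c uB uv) orbT.
    move: uv; rewrite /C1 mixN ?inOut // => uvB.
    have uo : (u, v) \notin obs Tm.
      apply/negP => /tl /= uT; move: uB; by rewrite (subsetP RsB _ uT).
    by rewrite in_setU (R1c uR (_ : (u, v) \in C2)) // /C2 (mixN _ _ uo).
  move: uv; rewrite /C1 mixA ?inOut // => uv.
  by rewrite in_setU (R1c uB uv) orbT.
rewrite !DlE ha hb ler_nat; apply: subset_leq_card; apply/subsetP => v.
rewrite !in_setD => /andP[vB vR]; move: (subsetP hd v vR); rewrite in_setU (negbTE vB) orbF => ->.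
by rewrite andbT; apply: contra vB; apply: (subsetP RsB).
Qed.


Lemma stepj (pig pis : policy V) d i j :
  \sum_A W A * Dl ((st pig d i A).1 :|: (st pis d j A).1) (pis (st pis d j A)) A
  <= \sum_A W A * mg (terminate E (psiA A) (st pig d i A)).
Proof.
pose X A := (st pig d i A).1 :|: (st pis d j A).1.
pose w A := pis (st pis d j A).
pose O A := Out (Rch (X A) A).
pose T A := terminate E (psiA A) (st pig d i A).
have agst : forall A (A' : {set V * V}), (forall e, e \in O A -> (e \in A) = (e \in A')) ->
    st pig d i A' = st pig d i A /\ st pis d j A' = st pis d j A.
  move=> A A' H; split; apply: st_stop => e eo; apply: H; rewrite /O inOut;
    apply: (subsetP (R1 _ _)).
    have [[_ _ tl _] _] := st_inv pig d i A.
    by rewrite /X in_setU tl.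
  have [[_ _ tl _] _] := st_inv pis d j A.
  by rewrite /X in_setU tl ?orbT.
have XO : forall A (A' : {set V * V}), (forall e, e \in O A -> (e \in A) = (e \in A')) ->
    X A' = X A /\ w A' = w A.
  by move=> A A' H; have [h1 h2] := agst A A' H; rewrite /X /w h1 h2.
have stopO : forall A (A' : {set V * V}), (forall e, e \in O A -> (e \in A) = (e \in A')) ->
    O A' = O A.
  move=> A A' H; have [h1 _] := XO A A' H; rewrite /O h1; congr Out.
  by apply: Rloc => e e1; apply: H; rewrite /O inOut.
have E1 : \sum_A W A * Dl (X A) (w A) A =
          \sum_A \sum_B W A * W B * Dl (X A) (w A) (mix A B (O A)).
  transitivity (\sum_A \sum_B W A * W B * Dl (X A) (w A) A).
    apply: eq_bigr => A _; rewrite -[LHS]mulr1 -W_sum big_distrr /=.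
    by apply: eq_bigr => B _; rewrite mulrAC.
  rewrite (@swapW O (fun A B => Dl (X A) (w A) A)) //.
  apply: eq_bigr => A _; apply: eq_bigr => B _.
  have ag : forall e, e \in O A -> (e \in A) = (e \in mix A B (O A)).
    by move=> e eO; rewrite mixA.
  by have [-> ->] := XO A _ ag.
have E2 : \sum_A \sum_B W A * W B * Dl (X A) (w A) (mix A B (O A)) <=
          \sum_A \sum_B W A * W B * Dl (T A).1 (w A) (mix A B (obs (T A))).
  apply: ler_sum => A _; apply: ler_sum => B _.
  case: (boolP (W A == 0)) => [/eqP ->|nA]; first by rewrite !mul0r.
  case: (boolP (W B == 0)) => [/eqP ->|nB]; first by rewrite mulr0 !mul0r.
  have AE := W_sub nA; have BE := W_sub nB.
  apply: ler_wpM2l; first by apply: mulr_ge0; apply: W_ge0.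
  have [I T0] := st_inv pig d i A.
  have [hT aT] := term_prop AE I T0.
  have [_ _ GTi _] := Good_term.
  apply: (KP (S := (st pig d i A).1)) => //; first exact: GTi.
  by rewrite /X subsetUl.
have E3 : \sum_A \sum_B W A * W B * Dl (T A).1 (w A) (mix A B (obs (T A))) =
          \sum_A W A * Deltaf_inf E p (T A).1 [set w A] (T A).2.
  rewrite (eq_bigr (fun A => W A * \sum_B W B * Dl (T A).1 (w A) (mix A B (obs (T A))))); last first.
    by move=> A _; rewrite big_distrr /=; apply: eq_bigr => B _; rewrite mulrA.
  apply: eqW => A AE.
  have [I T0] := st_inv pig d i A; have [_ _ GTi GTt] := Good_term.
  by rewrite (Dl_W (w A) AE (GTi _ _ I) (GTt _ _ T0)).
have := E2; rewrite -E1 E3 => H.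
apply: le_trans H _.
by apply: leW => A _ _; apply: le_mg.
Qed.


Lemma tele (pis : policy V) d (S : {set V}) A m :
  (#|Rch (S :|: (st pis d m A).1) A|)%:R =
  (#|Rch S A|)%:R + \sum_(j < m) Dl (S :|: (st pis d j A).1) (pis (st pis d j A)) A :> R.
Proof.
elim: m => [|m IH].
  by rewrite big_ord0 addr0 /st /= setU0.
rewrite big_ord_recr /= addrA -IH /Dl.
have -> : Rch (S :|: (st pis d m.+1 A).1) A =
          Rch ((S :|: (st pis d m A).1) :|: [set pis (st pis d m A)]) A.
  by rewrite RU st_Rch !RU setUA.
by rewrite addrC subrK.
Qed.

Lemma F4 (pig pis : policy V) d i k :
  Fval E p pis k d <= Gs pig d i + k%:R * \sum_A W A * mg (terminate E (psiA A) (st pig d i A)).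
Proof.
rewrite Fval_W.
apply: (le_trans (y := \sum_A W A * ((#|Rch (st pig d i A).1 A|)%:R +
   \sum_(j < k) Dl ((st pig d i A).1 :|: (st pis d j A).1) (pis (st pis d j A)) A))).
  apply: leW => A _ _; rewrite -tele ler_nat; apply: subset_leq_card.
  by apply: Rmono; rewrite subsetUr.
rewrite /Gs.
rewrite (eq_bigr (fun A => W A * (#|Rch (st pig d i A).1 A|)%:R + \sum_(j < k)
   W A * Dl ((st pig d i A).1 :|: (st pis d j A).1) (pis (st pis d j A)) A)); last first.
  by move=> A _; rewrite mulrDr big_distrr.
rewrite big_split /= lerD2l exchange_big /=.
apply: (le_trans (y := \sum_(j < k) \sum_A W A * mg (terminate E (psiA A) (st pig d i A)))).
  by apply: ler_sum => j _; exact: stepj.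
by rewrite sumr_const card_ord mulr_natl.
Qed.


Lemma zero_case A U : A \subset E -> W A != 0 -> InvS U -> Tru A U -> mg U = 0 ->
  mg (terminate E (psiA A) U) = 0.
Proof.
move=> AE nA IU TU m0.
have mAA : mix A A (obs U) = A.
  by apply/setP => e; rewrite /mix !in_setU in_setI in_setD; case: (e \in A); case: (e \in obs U).
have allv : forall v, v \in Rch U.1 A.
  move=> v; have h := le_mg U v; rewrite m0 (Dl_W v AE IU TU) in h.
  have pos : forall B, true -> 0 <= W B * Dl U.1 v (mix A B (obs U)).
    by move=> B _; apply: mulr_ge0; [exact: W_ge0 | exact: Dl_ge0].
  have h0 : \sum_B W B * Dl U.1 v (mix A B (obs U)) = 0.
    by apply/le_anti; rewrite h sumr_ge0.
  have := psumr_eq0P pos h0; move/(_ A isT); rewrite mAA => /eqP; rewrite mulf_eq0 (negbTE nA) /=.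
  rewrite DlE pnatr_eq0 cards_eq0 => /eqP/setP/(_ v); rewrite in_setD in_set0.
  have -> : v \in Rch [set v] A by apply: (subsetP (R1 _ _)); rewrite in_set1.
  by rewrite andbT => /negbFE.
have [hT _] := term_prop AE IU TU.
have Tt : (terminate E (psiA A) U).1 = setT.
  by rewrite hT; apply/setP => v; rewrite in_setT allv.
apply/le_anti; rewrite mg_ge0 andbT /mg /maxgain; apply: bigmax_le => // v _.
rewrite /Deltaf_inf /Deltaf_t big1 // => psi _.
by rewrite /Delta_t Tt setTU subrr mulr0.
Qed.

Lemma F3 (pig : policy V) d k i : greedy E p pig -> (i < k)%N ->
  \sum_A W A * mg (terminate E (psiA A) (st pig d i A)) <=
  alphaT E p pig k d * \sum_A W A * mg (st pig d i A).
Proof.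
move=> hg ik.
set a := alphaT E p pig k d.
have a0 : 0 <= a by apply: bigmax_ge_id.
pose U := st pig d i.
rewrite (eq_bigr (fun A => W A * (if mg (U A) == 0 then mg (terminate E (psiA A) (U A)) else 0)
   + W A * (if mg (U A) == 0 then 0 else mg (terminate E (psiA A) (U A))))); last first.
  by move=> A _; rewrite -mulrDr; case: eqP; rewrite ?addr0 ?add0r.
rewrite big_split /= big1 ?add0r; last first.
  move=> A _; case: (boolP (W A == 0)) => [/eqP -> | nA]; first by rewrite mul0r.
  case: eqP => [m0|]; last by rewrite mulr0.
  have [I T0] := st_inv pig d i A.
  by rewrite (zero_case (W_sub nA) nA I T0 m0) mulr0.
have Tw : \sum_A W A * (if mg (U A) == 0 then 0 else mg (terminate E (psiA A) (U A))) =
   \sum_A W A * \sum_B W B * (if mg (U A) == 0 then 0 else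
                 mg (terminate E (psiA (mix A B (obs (U A)))) (U A))).
  exact: (@tower _ U obs (fun U0 C => if mg U0 == 0 then 0 else mg (terminate E (psiA C) U0))
            (fun A A' H => st_stop H)).
rewrite Tw big_distrr /=.
rewrite [X in _ <= X](eq_bigr (fun A => W A * (a * mg (U A)))); last first.
  by move=> A _; rewrite mulrCA.
apply: leW => A AE nA.
case: eqP => [m0|mn].
  by rewrite big1 => [|B _]; [apply: mulr_ge0 => //; exact: mg_ge0 | rewrite mulr0].
have [IU TU] := st_inv pig d i A.
have [oE _ _ dj] := IU.
have eN : \sum_B W B * mg (terminate E (psiA (mix A B (obs (U A)))) (U A)) = Num (U A).
  rewrite (G1 IU) (@C1 (U A).2 (fun psi => mg (terminate E psi (U A))) dj oE).
  by apply: eq_bigr => B _; rewrite (mixU IU TU).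
rewrite eN.
have -> : Num (U A) = alpha_inf E p (U A) * mg (U A).
  by rewrite /alpha_inf divfK //; apply/eqP.
apply: ler_wpM2r; first exact: mg_ge0.
have tr : U A \in tree_statuses E p pig k d.
  rewrite inE; apply/orP; right; apply/existsP; exists (psiA A); apply/existsP.
  exists (Ordinal ik); rewrite full_psiA // Pr_W // lt_def nA W_ge0 /=.
  by [].
exact: (le_bigmax_cond _ _ tr).
Qed.


End Main.

Lemma final_ineq (R : realType) (k : nat) (a Fs : R) (G : nat -> R) :
  (0 < k)%N -> 0 <= a -> 0 <= Fs -> G 0%N = 0 ->
  (forall i, (i < k)%N -> G i <= G i.+1) ->
  (forall i, (i < k)%N -> Fs <= G i + k%:R * a * (G i.+1 - G i)) ->
  (1 - expR (- a^-1)) * Fs <= G k.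
Proof.
move=> k0 a0 F0 G0 mono key.
have Gk0 : forall i, (i <= k)%N -> 0 <= G i.
  elim=> [|i IH] ik; first by rewrite G0.
  exact: le_trans (IH (ltnW ik)) (mono i ik).
case: (eqVneq a 0) => [->|an].
  by rewrite invr0 oppr0 expR0 subrr mul0r; apply: Gk0.
have ap : 0 < a by rewrite lt_def an a0.
set c := k%:R * a.
have cp : 0 < c by rewrite /c mulr_gt0 // ltr0n.
set q := 1 - c^-1.
set qp := Num.max q 0.
have qp0 : 0 <= qp by rewrite /qp le_max lexx orbT.
have qpe : qp <= expR (- c^-1).
  rewrite /qp ge_max (ltW (expR_gt0 _)) andbT /q.
  by have := expR_ge1Dx (- c^-1).
have ind : forall i, (i <= k)%N -> Fs - G i <= qp ^+ i * Fs.
  elim=> [_|i IH ik]; first by rewrite G0 subr0 expr0 mul1r.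
  have ik' : (i < k)%N by [].
  have IHi := IH (ltnW ik).
  have hm := mono i ik'; have hk := key i ik'.
  set x := Fs - G i; set x' := Fs - G i.+1.
  have r1 : x' <= x by rewrite /x' /x lerD2l lerN2.
  have r2 : x' <= q * x.
    have h1 : 0 <= (c * (x - x') - x) / c.
      apply: divr_ge0; last exact: ltW.
      have -> : x - x' = G i.+1 - G i by rewrite /x /x'; ring.
      move: hk; rewrite -/c; set D := G i.+1 - G i; rewrite /x; lra.
    have e : (c * (x - x') - x) / c = q * x - x'.
      by rewrite /q; field; rewrite gt_eqF.
    by rewrite e subr_ge0 in h1.
  have qpi0 : 0 <= qp ^+ i.+1 * Fs by apply: mulr_ge0 => //; apply: exprn_ge0.
  case: (leP 0 x) => x0.
    apply: (le_trans r2); apply: (le_trans (y := qp * x)).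
      by apply: ler_wpM2r => //; rewrite /qp le_max lexx.
    by rewrite exprS -mulrA; apply: ler_wpM2l.
  by apply: le_trans r1 (le_trans (ltW x0) qpi0).
have hk := ind k (leqnn k).
have e1 : qp ^+ k * Fs <= expR (- a^-1) * Fs.
  apply: ler_wpM2r => //.
  have -> : - a^-1 = - c^-1 * k%:R.
    rewrite /c; field; apply/andP; split; rewrite ?an //.
    by rewrite pnatr_eq0 -lt0n.
  rewrite expRM_natr; apply: lerXn2r => //; rewrite nnegrE //.
  exact: ltW (expR_gt0 _).
have := le_trans hk e1.
by rewrite mulrBl mul1r lerBlDr addrC -lerBlDr.
Qed.

Unset Implicit Arguments.
Set Strict Implicit.

Theorem theorem1 (R : realType) (V : finType) (E : {set (V * V)})
    (p : (V * V) -> R)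
    (hp : forall e, e \in E -> 0 < p e <= 1)
    (k d : nat) (hk : (0 < k)%N) (hd : (0 < d)%N)
    (pig : policy V) (hg : greedy E p pig) (pis : policy V) :
  (1 - expR (- (alphaT E p pig k d)^-1)) * Fval E p pis k d
    <= Fval E p pig k d.
Proof.
have eG : Fval E p pig k d = Gs E p pig d k by rewrite Fval_W.
rewrite eG; apply: (final_ineq (G := Gs E p pig d)) => //.
- exact: bigmax_ge_id.
- rewrite Fval_W; apply: sumr_ge0 => A _; apply: mulr_ge0; [exact: W_ge0 | exact: ler0n].
- rewrite /Gs; apply: big1 => A _.
  have -> : Rch E (st E pig d 0 A).1 A = set0.
    apply/eqP; rewrite -subset0; apply: R2 => //= u v; by rewrite in_set0.
  by rewrite cards0 mulr0.
- move=> i ik; rewrite -subr_ge0 -(incr hp d i hg); apply: sumr_ge0 => A _.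
  by apply: mulr_ge0; [exact: W_ge0 | exact: mg_ge0].
- move=> i ik; apply: le_trans (F4 hp pig pis d i k) _; rewrite lerD2l -mulrA.
  apply: ler_wpM2l; first exact: ler0n.
  rewrite -(incr hp d i hg); exact: (F3 hp d hg ik).
Qed.
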